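(* Let $m\ge 2$, let $n_1,\dots,n_m\ge 4$ be even, and let $\mathcal{C}=\mathcal{C}(C_{n_1},\dots,C_{n_m})$ be the even chain cycle. Then the vertex cover number of its strong resolving graph is $$\alpha(\mathcal{C}_{SR})=1+\sum_{i=1}^{m}\frac{n_i-2}{2}.$$
   Context: Let $C_{n_1},\dots,C_{n_m}$ be pairwise disjoint cycles, $V(C_{n_i})=\{v^i_1,\dots,v^i_{n_i}\}$ with $v^i_j$ adjacent to $v^i_{j+1}$ (indices mod $n_i$). The even chain cycle (all $n_i$ even) is obtained by identifying $v^i_{n_i/2+1}$ with $v^{i+1}_1$ for $i=1,\dots,m-1$. A vertex $u$ is maximally distant from $v$ if every neighbor $w$ of $u$ satisfies $d(v,w)\le d(u,v)$; $u,v$ are mutually maximally distant if each is maximally distant from the other. The strong resolving graph $G_{SR}$ of a connected graph $G$ has vertex set $V(G)$, with $u,v$ adjacent iff they are mutually maximally distant in $G$. $\alpha(H)$ denotes the minimum size of a vertex cover of $H$. *)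

(* Defs.v *)
From mathcomp Require Import all_boot.
Set Implicit Arguments. Unset Strict Implicit. Unset Printing Implicit Defensive.

Fixpoint within (T : finType) (e : rel T) (k : nat) (u v : T) : bool :=
  (u == v) ||
  (match k with
   | 0 => false
   | k'.+1 => [exists w, e u w && within e k' w v]
   end).

(* graph distance (for connected graphs on T it is < #|T|): least k with a
   walk of length <= k *)
Definition dist (T : finType) (e : rel T) (u v : T) : nat :=
  find (fun k => within e k u v) (iota 0 #|T|).

Definition max_distant (T : finType) (e : rel T) (u v : T) : bool :=
  [forall w, e u w ==> (dist e v w <= dist e u v)].

Definition mutually_max_distant (T : finType) (e : rel T) (u v : T) : bool :=
  max_distant e u v && max_distant e v u.

Definition strong_resolving_graph (T : finType) (e : rel T) : rel T :=
  fun u v => (u != v) && mutually_max_distant e u v.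

Definition vertex_cover (T : finType) (e : rel T) (S : {set T}) : bool :=
  [forall x, forall y, e x y ==> (x \in S) || (y \in S)].

Definition vertex_cover_number (T : finType) (e : rel T) : nat :=
  \big[minn/#|T|]_(S : {set T} | vertex_cover e S) #|S|.

(* Cycles are indexed i = 0..m-1 (paper's i+1) and the vertices of cycle i are
   (i, j), j = 0..n i - 1 (paper's v^{i+1}_{j+1}).  The paper identifies
   v^i_{n_i/2+1} with v^{i+1}_1, i.e. here (i, n i ./2) with (i+1, 0) for
   i+1 < m.  We take (i+1, 0) as the representative of that class. *)

Definition Kbound (m : nat) (n : nat -> nat) : nat := \max_(i < m) n i.

Definition raw_vtx (m : nat) (n : nat -> nat) := ('I_m * 'I_(Kbound m n))%type.

Definition toN m n (p : raw_vtx m n) : nat * nat := (nat_of_ord p.1, nat_of_ord p.2).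

Definition repn (m : nat) (n : nat -> nat) (a : nat * nat) : nat * nat :=
  if (a.2 == (n a.1)./2) && (a.1.+1 < m) then (a.1.+1, 0) else a.

Definition is_vtx m n (p : raw_vtx m n) : bool :=
  (p.2 < n p.1) && ~~ ((nat_of_ord p.2 == (n p.1)./2) && (p.1.+1 < m)).

Definition chain_vtx (m : nat) (n : nat -> nat) :=
  {p : raw_vtx m n | is_vtx p}.

Definition cyc_adj (n : nat -> nat) (a b : nat * nat) : bool :=
  [&& a.1 == b.1, a.2 < n a.1, b.2 < n b.1 &
      (b.2 == a.2.+1 %% n a.1) || (a.2 == b.2.+1 %% n a.1)].

Definition chain_adj (m : nat) (n : nat -> nat) : rel (chain_vtx m n) :=
  fun u v => [exists a : raw_vtx m n, exists b : raw_vtx m n,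
    [&& cyc_adj n (toN a) (toN b),
        repn m n (toN a) == toN (val u) &
        repn m n (toN b) == toN (val v)]].

(* Main.v *)
Require Import Defs.
From mathcomp Require Import all_boot.
From mathcomp Require Import zify.
Set Implicit Arguments. Unset Strict Implicit. Unset Printing Implicit Defensive.

Section Chain.
Variable m : nat.
Variable n : nat -> nat.
Hypothesis hm : 2 <= m.
Hypothesis hn : forall i, i < m -> 4 <= n i /\ ~~ odd (n i).

Definition hh c := (n c)./2.
Lemma hnE c : c < m -> n c = hh c + hh c /\ 2 <= hh c.
Proof.
move=> /hn [h4 hev]; have E := halfK (n c).
rewrite (negbTE hev) subn0 -addnn in E; rewrite /hh; lia.
Qed.

Definition P c := \sum_(0 <= k < c) hh k.
Lemma PS c : P c.+1 = P c + hh c. Proof. by rewrite /P big_nat_recr. Qed.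
Lemma Pmono c c' : c <= c' -> P c <= P c'.
Proof.
elim: c' => [|c' IH]; first by rewrite leqn0 => /eqP ->.
rewrite leq_eqVlt => /orP [/eqP -> //|]; rewrite ltnS => /IH; rewrite PS; lia.
Qed.
Lemma Plt c c' : c < c' -> P c + hh c <= P c'.
Proof. by move=> H; rewrite -PS; apply: Pmono. Qed.

Definition tt c p := minn p (n c - p).
Definition X (x : nat * nat) := P x.1 + tt x.1 x.2.
Definition ad a b := (a - b) + (b - a).
Definition cd c p q := minn (ad p q) (n c - ad p q).
Definition f (x y : nat * nat) :=
  if x.1 == y.1 then cd x.1 x.2 y.2 else ad (X x) (X y).
Definition valid (x : nat * nat) := (x.1 < m) && (x.2 < n x.1).
Definition isrep (x : nat * nat) := valid x && ~~ ((x.2 == hh x.1) && (x.1.+1 < m)).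

Lemma f_sym x y : f x y = f y x.
Proof.
case: x y => [c p] [c' p']; rewrite /f /cd /ad /=.
case: (c =P c') => [<-|ne]; first by rewrite eqxx; lia.
have /negbTE -> : c' != c by apply/eqP => E; apply: ne.
lia.
Qed.

Lemma f_self x : f x x = 0.
Proof. rewrite /f eqxx /cd /ad; lia. Qed.

Lemma repn_f a y : valid a -> valid y -> f (repn m n a) y = f a y.
Proof.
case: a y => [c p] [c' p']; rewrite /valid /repn /= => /andP [Hc Hp] /andP [Hc' Hp'].
case: ifP => // /andP [/eqP Hph Hcm].
have [E1 H1] := hnE Hc; have [E2 H2] := hnE Hcm; have [E3 H3] := hnE Hc'.
have PE := PS c.
rewrite /f /X /cd /ad /tt /=.
case: (c.+1 =P c') => [Ec|ne1].
  subst c'. have /negbTE -> : c != c.+1 by rewrite neq_ltn ltnSn.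
  rewrite -/(hh c) in Hph. lia.
case: (c =P c') => [Ec|ne2].
  subst c'. rewrite -/(hh c) in Hph.
  have Hl := Plt (ltnSn c). lia.
rewrite -/(hh c) in Hph. lia.
Qed.

Lemma modS p N : p < N -> p.+1 %% N = if p.+1 == N then 0 else p.+1.
Proof. move=> H; case: eqP => [->|ne]; first by rewrite modnn. by rewrite modn_small; lia. Qed.

Lemma lip a b y : a.1 < m -> cyc_adj n a b -> valid y -> f a y <= (f b y).+1.
Proof.
case: a b y => [c p] [c2 q] [c' p']; rewrite /cyc_adj /valid /= => Hc.
case/and4P => /eqP <- Hp Hq Hadj /andP [Hc' Hp'].
have [E1 H1] := hnE Hc; have [E3 H3] := hnE Hc'.
move: Hadj; rewrite !modS //.
rewrite /f /X /cd /ad /tt /=.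
case: (c =P c') => [Ec|ne].
  subst c'; case: ifP => [/eqP ?|_]; case: ifP => [/eqP ?|_]; lia.
case: ifP => [/eqP ?|_]; case: ifP => [/eqP ?|_]; lia.
Qed.


Lemma adj_gen c p q : p < n c -> q < n c ->
  (q = p.+1 \/ (p.+1 = n c /\ q = 0) \/ p = q.+1 \/ (q.+1 = n c /\ p = 0)) ->
  cyc_adj n (c,p) (c,q).
Proof.
move=> Hp Hq H; rewrite /cyc_adj /= eqxx Hp Hq /= !modS //.
case: ifP => H1; case: ifP => H2; lia.
Qed.

Lemma repn_rep U : isrep U -> repn m n U = U.
Proof. by case/andP => _ /negbTE; rewrite /repn /hh => ->. Qed.

Lemma repn_eq a U : repn m n a = U -> (U.2 != 0) || (U.1 == 0) -> a = U.
Proof.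
by rewrite /repn; case: ifP => // _ <-.
Qed.

Ltac unf := rewrite /f /X /cd /ad /tt /=.

Lemma desc U V : isrep U -> isrep V -> U != V ->
  exists a b, [/\ a.1 < m, cyc_adj n a b, repn m n a = U & (f b V).+1 = f U V].
Proof.
case: U V => [c p] [c' p']; rewrite /isrep /valid /= => /andP [/andP [Hc Hp] Hr] /andP [/andP [Hc' Hp'] Hr'] Hne.
have [E1 H1] := hnE Hc; have [E3 H3] := hnE Hc'.
have Hrep : repn m n (c,p) = (c,p) by rewrite repn_rep // /isrep /valid /= Hc Hp Hr.
case: (ltngtP c c') => Hcc.
-
  have Hl := Plt Hcc.
  have Hph : p != hh c by apply/negP => /eqP E; move: Hr; rewrite E eqxx /=; lia.
  case: (ltnP p (hh c)) => Hph2.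
    exists (c,p), (c,p.+1); split => //; first by apply: adj_gen; lia.
    unf; have /negbTE -> : c != c' by lia. lia.
  exists (c,p), (c,p.-1); split => //; first by apply: adj_gen; lia.
  unf; have /negbTE -> : c != c' by lia. lia.
-
  have Hl := Plt Hcc.
  case: (posnP p) => Hp0.
    subst p; have [d Ed] : exists d, c = d.+1 by exists c.-1; lia.
    subst c.
    have Hd : d < m by lia.
    have [E2 H2] := hnE Hd. have PE := PS d.
    exists (d, hh d).
    exists (d, if (c' == d) && (hh d < p') then (hh d).+1 else (hh d).-1); split.
    + done.
    + case: ifP => ?; apply: adj_gen; lia.
    + by rewrite /repn /= -/(hh d) eqxx Hc.
    + unf. case: (c' =P d) => [Ed|Ned].
        subst c'; rewrite eqxx /=.
        have Hr2 : p' != hh d by move: Hr'; rewrite Hc andbT.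
        have /negbTE -> : d.+1 != d by lia.
        case: ifP => Hq; lia.
      have /negbTE -> : d != c' by apply/eqP => E; apply: Ned.
      have /negbTE -> : d.+1 != c' by lia.
      have Hl2 : P c' + hh c' <= P d by apply: Plt; lia.
      rewrite /=; lia.
  case: (leqP p (hh c)) => Hph.
    exists (c,p), (c,p.-1); split => //; first by apply: adj_gen; lia.
    unf; have /negbTE -> : c != c' by lia. lia.
  exists (c,p), (c,if p.+1 == n c then 0 else p.+1); split => //.
    by case: ifP => ?; apply: adj_gen; lia.
  unf; have /negbTE -> : c != c' by lia. case: ifP; lia.
-
  subst c'.
  have Hpp : p != p' by move: Hne; apply: contra => /eqP ->.
  have Hup : ((p < p') && (p' - p <= hh c)) || ((p' < p) && (hh c < p - p')) ->
    exists a b, [/\ a.1 < m, cyc_adj n a b, repn m n a = (c,p) & (f b (c,p')).+1 = f (c,p) (c,p')].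
    move=> H; exists (c,p), (c,if p.+1 == n c then 0 else p.+1); split => //.
      by case: ifP => ?; apply: adj_gen; lia.
    unf; rewrite eqxx; case: ifP; lia.
  have Hdn : ((p < p') && (hh c < p' - p)) || ((p' < p) && (p - p' <= hh c)) ->
    exists a b, [/\ a.1 < m, cyc_adj n a b, repn m n a = (c,p) & (f b (c,p')).+1 = f (c,p) (c,p')].
    move=> H; exists (c,p), (c,if p == 0 then (n c).-1 else p.-1); split => //.
      by case: ifP => ?; apply: adj_gen; lia.
    unf; rewrite eqxx; case: ifP; lia.
  case: (ltnP p p') => H.
    case: (leqP (p' - p) (hh c)) => H2; [apply: Hup | apply: Hdn]; lia.
  case: (leqP (p - p') (hh c)) => H2; [apply: Hdn | apply: Hup]; lia.
Qed.


Definition NSp (x : nat * nat) := ((x.2 == 0) && (0 < x.1)) || (hh x.1 <= x.2).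
Definition NSu (x : nat * nat) := ((x.2 == 0) && (0 < x.1)) || (hh x.1 < x.2).

Lemma asc U V : isrep U -> isrep V -> U != V -> NSu U -> NSp V ->
  exists a b, [/\ a.1 < m, cyc_adj n a b, repn m n a = U & f U V < f b V].
Proof.
case: U V => [c p] [c' p']; rewrite /isrep /valid /NSu /NSp /= => /andP [/andP [Hc Hp] Hr] /andP [/andP [Hc' Hp'] Hr'] Hne HU HV.
have [E1 H1] := hnE Hc; have [E3 H3] := hnE Hc'.
have Hrep : repn m n (c,p) = (c,p) by rewrite repn_rep // /isrep /valid /= Hc Hp Hr.
case/orP: HU => [/andP [/eqP Hp0 Hc0] | Hlow].
- subst p; have [d Ed] : exists d, c = d.+1 by exists c.-1; lia.
  subst c. have Hd : d < m by lia.
  have [E2 H2] := hnE Hd. have PE := PS d.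
  case: (leqP d.+1 c') => Hcc.
    exists (d, hh d), (d, (hh d).-1); split.
    + done.
    + apply: adj_gen; lia.
    + by rewrite /repn /= -/(hh d) eqxx Hc.
    + unf. have /negbTE -> : d != c' by lia.
      case: (d.+1 =P c') => [Ec|Nc].
        subst c'; lia.
      have Hl2 : P d.+1 + hh d.+1 <= P c' by apply: Plt; lia.
      lia.
  exists (d.+1, 0), (d.+1, 1); split => //.
    apply: adj_gen; lia.
  have Hl2 : P c' + hh c' <= P d.+1 by apply: Plt; lia.
  unf. have /negbTE -> : d.+1 != c' by lia. lia.
- case: (ltngtP c c') => Hcc.
  + have Hl := Plt Hcc.
    exists (c,p), (c,if p.+1 == n c then 0 else p.+1); split => //.
      by case: ifP => ?; apply: adj_gen; lia.
    unf; have /negbTE -> : c != c' by lia. case: ifP; lia.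
  + have Hl := Plt Hcc.
    exists (c,p), (c,p.-1); split => //; first by apply: adj_gen; lia.
    unf; have /negbTE -> : c != c' by lia. lia.
  + subst c'.
    have Hpp : p != p' by move: Hne; apply: contra => /eqP ->.
    case: (boolP ((p' == 0) || (p < p'))) => Hd.
      exists (c,p), (c,p.-1); split => //; first by apply: adj_gen; lia.
      unf; rewrite eqxx; lia.
    exists (c,p), (c,if p.+1 == n c then 0 else p.+1); split => //.
      by case: ifP => ?; apply: adj_gen; lia.
    unf; rewrite eqxx; case: ifP; lia.
Qed.

Definition partner (x : nat * nat) :=
  if x.2 == 0 then (m.-1, hh m.-1) else (x.1, x.2 + hh x.1).
Definition inS (x : nat * nat) :=
  ((x.1 == 0) && (x.2 == 0)) || ((0 < x.2) && (x.2 < hh x.1)).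

Lemma P0 : P 0 = 0. Proof. by rewrite /P big_geq. Qed.

Lemma mpos U a b : isrep U -> inS U -> a.1 < m -> cyc_adj n a b -> repn m n a = U ->
  f b (partner U) <= f U (partner U).
Proof.
move=> HU HS Ha Hab Hr.
have Ea : a = U.
  apply: (repn_eq Hr). case/orP: HS => /andP [H1 H2]; [rewrite H1 orbT | rewrite -lt0n H1] => //.
subst a; case: U b HU HS Ha Hab Hr => [c p] [c2 q]; rewrite /isrep /valid /inS /partner /= => /andP [/andP [Hc Hp] Hr] HS _.
case/and4P => /eqP /= Ec2 _ Hq _ _; subst c2.
have [E1 H1] := hnE Hc.
case/orP: HS => [/andP [/eqP Ec /eqP Ep] | /andP [Hp1 Hp2]].
- subst c p; rewrite eqxx.
  have Hm : m.-1 < m by lia.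
  have [E2 H2] := hnE Hm. have Hl : P 0 + hh 0 <= P m.-1 by apply: Plt; lia.
  have := P0. unf. have /negbTE -> : 0 != m.-1 by lia. lia.
- have /negbTE -> : p != 0 by lia.
  unf; rewrite eqxx; lia.
Qed.

Lemma mpos' U a b : isrep U -> inS U -> a.1 < m -> cyc_adj n a b -> repn m n a = partner U ->
  f b U <= f (partner U) U.
Proof.
case: U => [c p]; rewrite /isrep /valid /inS /= => /andP [/andP [Hc Hp] Hr] HS Ha Hab Hrp.
have [E1 H1] := hnE Hc.
have Hm : m.-1 < m by lia.
have [E2 H2] := hnE Hm.
have Ea : a = partner (c,p).
  apply: (repn_eq Hrp); rewrite /partner /=; case: ifP => _ /=; lia.
subst a; move: Hab Ha; rewrite /partner /=.
case/orP: HS => [/andP [/eqP Ec /eqP Ep] | /andP [Hp1 Hp2]].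
- subst c p; rewrite eqxx /=.
  case: b => [c2 q]; case/and4P => /eqP /= Ec2 _ Hq _ _ /=; subst c2.
  have Hl : P 0 + hh 0 <= P m.-1 by apply: Plt; lia.
  have := P0. unf. have /negbTE -> : m.-1 != 0 by lia. lia.
- have /negbTE -> : p != 0 by lia.
  case: b => [c2 q]; case/and4P => /eqP /= Ec2 _ Hq _ _ /=; subst c2.
  unf; rewrite eqxx; lia.
Qed.

Lemma partner_ok U : isrep U -> inS U -> isrep (partner U) && ~~ inS (partner U).
Proof.
case: U => [c p]; rewrite /isrep /valid /inS /partner /= => /andP [/andP [Hc Hp] Hr] HS.
have [E1 H1] := hnE Hc.
have Hm : m.-1 < m by lia.
have [E2 H2] := hnE Hm.
case: ifP => /= Hp0; lia.
Qed.

Lemma partner_inj U U' : inS U -> inS U' -> partner U = partner U' -> U = U'.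
Proof.
case: U U' => [c p] [c' p']; rewrite /inS /partner /=.
case: ifP => /eqP H1; case: ifP => /eqP H2 /=; move=> S1 S2 E;
  have E1 := f_equal fst E; have E2 := f_equal snd E; simpl in E1, E2.
- congr pair; lia.
- subst c'; lia.
- subst c; lia.
- subst c'; congr pair; lia.
Qed.


Definition NN (v : chain_vtx m n) : nat * nat := toN (val v).
Definition F (u v : chain_vtx m n) := f (NN u) (NN v).

Lemma NN_rep v : isrep (NN v).
Proof. case: v => [[i j] H]; rewrite /NN /isrep /valid /= ltn_ord. exact: H. Qed.

Lemma NN_inj : injective NN.
Proof.
move=> [[i j] H] [[i' j'] H']; rewrite /NN /toN /= => E.
have E1 := f_equal fst E; have E2 := f_equal snd E; simpl in E1, E2.
apply: val_inj => /=; congr pair; exact: val_inj.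
Qed.

Lemma raw_surj x : valid x -> exists r : raw_vtx m n, toN r = x.
Proof.
case: x => [c p]; rewrite /valid /= => /andP [Hc Hp].
have Hk : p < Kbound m n.
  apply: (leq_trans Hp); rewrite /Kbound.
  exact: (@leq_bigmax _ (fun i : 'I_m => n i) (Ordinal Hc)).
by exists (Ordinal Hc, Ordinal Hk).
Qed.

Lemma NN_surj x : isrep x -> exists v : chain_vtx m n, NN v = x.
Proof.
move=> H; have [r Er] := raw_surj (proj1 (andP H)).
have Hv : is_vtx r.
  move: H; rewrite -Er /isrep /valid /is_vtx /toN /= => /andP [/andP [_ ->] ->]. done.
by exists (exist _ r Hv).
Qed.

Lemma repn_isrep b : valid b -> isrep (repn m n b).
Proof.
case: b => [c p]; rewrite /valid /isrep /repn /= => /andP [Hc Hp].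
case: ifP => /=.
  move=> /andP [_ Hcm]; have [E H] := hnE Hcm; rewrite /valid /= Hcm /=; lia.
by rewrite /valid /= Hc Hp /hh => ->.
Qed.

Lemma adj_valid a b : a.1 < m -> cyc_adj n a b -> valid a /\ valid b.
Proof.
case: a b => [c p] [c' q]; rewrite /cyc_adj /valid /= => Hc /and4P [/eqP <- Hp Hq _].
by rewrite Hc Hp Hq.
Qed.

Lemma adjE u w : chain_adj u w <->
  exists a b, [/\ a.1 < m, cyc_adj n a b, repn m n a = NN u & repn m n b = NN w].
Proof.
split.
  move=> /existsP [a /existsP [b /and3P [H1 /eqP H2 /eqP H3]]].
  by exists (toN a), (toN b); split => //; rewrite /toN /= ltn_ord.
move=> [a [b [Ha Hab Hra Hrb]]].
have [Va Vb] := adj_valid Ha Hab.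
have [ra Ea] := raw_surj Va; have [rb Eb] := raw_surj Vb.
apply/existsP; exists ra; apply/existsP; exists rb.
by rewrite Ea Eb Hab Hra Hrb !eqxx.
Qed.

Lemma F_lip u w v : chain_adj u w -> F u v <= (F w v).+1.
Proof.
move=> /adjE [a [b [Ha Hab Hra Hrb]]].
have [Va Vb] := adj_valid Ha Hab.
have Vv : valid (NN v) by case/andP: (NN_rep v).
rewrite /F -Hra -Hrb !repn_f //. exact: lip.
Qed.

Lemma F_desc u v : u != v -> exists w, chain_adj u w /\ (F w v).+1 = F u v.
Proof.
move=> Huv.
have HN : NN u != NN v by apply: contra Huv => /eqP /NN_inj ->.
have [a [b [Ha Hab Hra Hf]]] := desc (NN_rep u) (NN_rep v) HN.
have [Va Vb] := adj_valid Ha Hab.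
have [w Ew] := NN_surj (repn_isrep Vb).
exists w; split.
  by apply/adjE; exists a, b.
have Vv : valid (NN v) by case/andP: (NN_rep v).
by rewrite /F Ew repn_f.
Qed.

Lemma F_self u : F u u = 0. Proof. exact: f_self. Qed.

Lemma F_pos u v : u != v -> 0 < F u v.
Proof. by move=> /F_desc [w [_ <-]]. Qed.

Lemma withinE k u v : within (@chain_adj m n) k u v = (F u v <= k).
Proof.
elim: k u => [|k IH] u /=.
  rewrite orbF; case: eqP => [->|/eqP ne]; first by rewrite F_self.
  by have := F_pos ne; case: (F u v).
apply/idP/idP.
  case/orP => [/eqP ->|/existsP [w /andP [Huw]]]; first by rewrite F_self.
  rewrite IH => Hw; have := F_lip v Huw; lia.
move=> H; case: (eqVneq u v) => [->|ne]; first by rewrite ?eqxx.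
have [w [Huw Hw]] := F_desc ne.
apply/orP; right; apply/existsP; exists w; rewrite Huw IH /=; lia.
Qed.

Lemma find_le x s N : s <= x -> x < s + N -> find (fun k => x <= k) (iota s N) = x - s.
Proof.
elim: N s => [|N IH] s H1 H2; first by lia.
rewrite /= ; case: (leqP x s) => H3; first by lia.
rewrite IH; lia.
Qed.

Lemma F_bound u v : F u v < #|{: {p : raw_vtx m n | is_vtx p}}|.
Proof.
have Hex : forall d u', F u' v = d -> forall k, k <= d -> exists w, F w v = k.
  elim => [|d IH] u' Hd k Hk.
    by exists u'; rewrite Hd; lia.
  case: (eqVneq k d.+1) => [->|ne]; first by exists u'.
  case: (eqVneq u' v) => [E|ne2]; first by move: Hd; rewrite E F_self.
  have [w [_ Hw]] := F_desc ne2.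
  apply: (IH w); lia.
pose g (k : 'I_(F u v).+1) := odflt v [pick w | F w v == k].
have Hg : forall k, F (g k) v = k.
  move=> k; rewrite /g; case: pickP => [w /eqP //|H].
  have [w Hw] := Hex _ u erefl k (ltn_ord k).
  by move: (H w); rewrite Hw eqxx.
have : injective g by move=> k k' E; apply: ord_inj; have := Hg k; rewrite E Hg.
by move/leq_card; rewrite card_ord.
Qed.

Lemma distE u v : dist (@chain_adj m n) u v = F u v.
Proof.
rewrite /dist (eq_find (fun k => withinE k u v)) find_le; first by rewrite subn0.
  done.
by rewrite add0n F_bound.
Qed.


Lemma mdE u v : max_distant (@chain_adj m n) u v =
  [forall w, chain_adj u w ==> (F v w <= F u v)].
Proof. by rewrite /max_distant; apply: eq_forallb => w; rewrite !distE. Qed.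

Lemma SR_pos x y : inS (NN x) -> NN y = partner (NN x) ->
  strong_resolving_graph (@chain_adj m n) x y.
Proof.
move=> HS Ey.
have /andP [Hr Hn] := partner_ok (NN_rep x) HS.
have Vx : valid (NN x) by case/andP: (NN_rep x).
have Vy : valid (NN y) by case/andP: (NN_rep y).
rewrite /strong_resolving_graph /mutually_max_distant !mdE.
apply/and3P; split.
- apply/eqP => E; subst y. by rewrite -Ey HS in Hn.
- apply/forallP => w; apply/implyP => /adjE [a [b [Ha Hab Hra Hrb]]].
  have [Va Vb] := adj_valid Ha Hab.
  rewrite /F f_sym -Hrb repn_f // Ey.
  exact: (mpos (NN_rep x) HS Ha Hab Hra).
- apply/forallP => w; apply/implyP => /adjE [a [b [Ha Hab Hra Hrb]]].
  have [Va Vb] := adj_valid Ha Hab.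
  rewrite /F f_sym -Hrb repn_f // Ey.
  rewrite Ey in Hra.
  exact: (mpos' (NN_rep x) HS Ha Hab Hra).
Qed.

Lemma notS_cases x : isrep x -> ~~ inS x -> NSp x /\ (NSu x \/ x = (m.-1, hh m.-1)).
Proof.
case: x => [c p]; rewrite /isrep /valid /inS /NSp /NSu /= => /andP [/andP [Hc Hp] Hr] HS.
have [E1 H1] := hnE Hc.
split; first by lia.
case: (boolP (((p == 0) && (0 < c)) || (hh c < p))) => H; first by left.
right; have Ec : c = m.-1 by lia.
subst c; congr pair; lia.
Qed.

Lemma SR_neg x y : ~~ inS (NN x) -> ~~ inS (NN y) ->
  ~~ strong_resolving_graph (@chain_adj m n) x y.
Proof.
move=> Hx Hy.
rewrite /strong_resolving_graph /mutually_max_distant !mdE.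
case: (eqVneq x y) => [->|ne] //=.
have HN : NN x != NN y by apply: contra ne => /eqP /NN_inj ->.
have Vx : valid (NN x) by case/andP: (NN_rep x).
have Vy : valid (NN y) by case/andP: (NN_rep y).
have [Px Cx] := notS_cases (NN_rep x) Hx.
have [Py Cy] := notS_cases (NN_rep y) Hy.
apply/negP => /andP [HA HB].
case: Cx => [Ux|Ex].
  have [a [b [Ha Hab Hra Hlt]]] := asc (NN_rep x) (NN_rep y) HN Ux Py.
  have [Va Vb] := adj_valid Ha Hab.
  have [w Ew] := NN_surj (repn_isrep Vb).
  move: HA => /forallP /(_ w) /implyP H.
  have Hxw : chain_adj x w by apply/adjE; exists a, b.
  move: (H Hxw); rewrite /F f_sym Ew repn_f // => H'; by move: Hlt; rewrite ltnNge H'.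
case: Cy => [Uy|Ey].
  have HN' : NN y != NN x by rewrite eq_sym.
  have [a [b [Ha Hab Hra Hlt]]] := asc (NN_rep y) (NN_rep x) HN' Uy Px.
  have [Va Vb] := adj_valid Ha Hab.
  have [w Ew] := NN_surj (repn_isrep Vb).
  move: HB => /forallP /(_ w) /implyP H.
  have Hyw : chain_adj y w by apply/adjE; exists a, b.
  move: (H Hyw); rewrite /F f_sym Ew repn_f // => H'; by move: Hlt; rewrite ltnNge H'.
by move: HN; rewrite Ex Ey eqxx.
Qed.

Definition S0 := [set v : chain_vtx m n | inS (NN v)].

Lemma S0_cover : vertex_cover (strong_resolving_graph (@chain_adj m n)) S0.
Proof.
apply/forallP => x; apply/forallP => y; apply/implyP => H; rewrite !inE.
case: (boolP (inS (NN x))) => //= Hx; case: (boolP (inS (NN y))) => //= Hy.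
by rewrite (negbTE (SR_neg Hx Hy)) in H.
Qed.

Lemma S0_min S : vertex_cover (strong_resolving_graph (@chain_adj m n)) S -> #|S0| <= #|S|.
Proof.
move=> HS.
pose pi v := odflt v [pick w | NN w == partner (NN v)].
have Hpi : forall v, inS (NN v) -> NN (pi v) = partner (NN v).
  move=> v Hv; rewrite /pi; case: pickP => [w /eqP //|H].
  have /andP [Hr _] := partner_ok (NN_rep v) Hv.
  have [w Ew] := NN_surj Hr.
  by move: (H w); rewrite Ew eqxx.
pose g v := if v \in S then v else pi v.
have Hg : {in S0 &, injective g}.
  move=> v v'; rewrite !inE => Hv Hv'; rewrite /g.
  have /andP [_ Hn] := partner_ok (NN_rep v) Hv.
  have /andP [_ Hn'] := partner_ok (NN_rep v') Hv'.
  case: ifP => H1; case: ifP => H2 //.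
  - move=> E; have := Hpi v' Hv'; rewrite -E => E2; by rewrite -E2 Hv in Hn'.
  - move=> E; have := Hpi v Hv; rewrite E => E2; by rewrite -E2 Hv' in Hn.
  - move=> E; apply: NN_inj.
    have E' : partner (NN v) = partner (NN v') by rewrite -(Hpi v Hv) -(Hpi v' Hv') E.
    exact: partner_inj Hv Hv' E'.
have Hsub : g @: S0 \subset S.
  apply/subsetP => _ /imsetP [v Hv ->]; rewrite /g; case: ifP => // Hn.
  rewrite inE in Hv.
  have Hsr := SR_pos Hv (Hpi v Hv).
  move: HS => /forallP /(_ v) /forallP /(_ (pi v)) /implyP /(_ Hsr).
  by rewrite Hn.
rewrite -(card_in_imset Hg); exact: subset_leq_card.
Qed.


Definition Lt := [seq (c, p) | c <- iota 0 m, p <- iota 1 (hh c).-1].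

Lemma memL x : isrep x -> (x \in (0,0) :: Lt) = inS x.
Proof.
case: x => [c p]; rewrite /isrep /valid /inS /= => /andP [/andP [Hc Hp] Hr].
rewrite inE xpair_eqE; apply/idP/idP.
  case/orP => [/andP [/eqP -> /eqP ->] //|].
  case/allpairsPdep => c' [p' [H1 H2 E]]; rewrite !mem_iota in H1 H2.
  have E1 := f_equal fst E; have E2 := f_equal snd E; simpl in E1, E2; subst c' p'.
  have [E3 H3] := hnE Hc. lia.
case/orP => [->//|/andP [Hp1 Hp2]]; apply/orP; right.
apply/allpairsPdep; exists c, p; split => //; rewrite mem_iota; lia.
Qed.

Lemma repL x : x \in (0,0) :: Lt -> isrep x.
Proof.
rewrite inE; case/orP => [/eqP ->|].
  have H0 : 0 < m by lia.
  have [E1 H1] := hnE H0.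
  rewrite /isrep /valid /= H0 /=; lia.
case/allpairsPdep => c [p [H1 H2 ->]]; rewrite !mem_iota in H1 H2.
have Hc : c < m by lia.
have [E1 H3] := hnE Hc.
rewrite /isrep /valid /=; lia.
Qed.

Lemma uniqL : uniq ((0,0) :: Lt).
Proof.
rewrite cons_uniq; apply/andP; split.
  apply/negP => /allpairsPdep [c [p [_ H2 E]]]; rewrite mem_iota in H2.
  have E2 := f_equal snd E; simpl in E2; lia.
apply: allpairs_uniq_dep; first exact: iota_uniq.
  by move=> c _; exact: iota_uniq.
by move=> [c p] [c' p'] _ _ /= E; have E1 := f_equal fst E; have E2 := f_equal snd E;
  simpl in E1, E2; subst.
Qed.

Lemma card_S0 : #|S0| = 1 + \sum_(i < m) (n i - 2) %/ 2.
Proof.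
have Hperm : perm_eq (map NN (enum S0)) ((0,0) :: Lt).
  apply: uniq_perm; last 1 first.
  - move=> x; apply/mapP/idP.
      by case=> v; rewrite mem_enum inE => Hv ->; rewrite memL //; exact: NN_rep.
    move=> Hx; have Hr := repL Hx; have [v Ev] := NN_surj Hr.
    by exists v => //; rewrite mem_enum inE Ev -memL.
  - by rewrite map_inj_uniq ?enum_uniq //; exact: NN_inj.
  - exact: uniqL.
rewrite cardE -(size_map NN) (perm_size Hperm) /= size_allpairs_dep add1n; congr S.
have Ei : iota 0 m = index_iota 0 m by rewrite /index_iota subn0.
rewrite sumnE big_map /= Ei big_mkord.
apply: eq_bigr => i _; rewrite size_iota.
have [E1 H1] := hnE (ltn_ord i). lia.
Qed.

End Chain.

Lemma bigmin_le (I : finType) (P : pred I) (G : I -> nat) x0 i :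
  P i -> \big[minn/x0]_(j | P j) G j <= G i.
Proof.
move=> Pi; have : i \in index_enum I by rewrite mem_index_enum.
elim: (index_enum I) => [//|j r IH]; rewrite inE big_cons => /orP [/eqP <-|/IH H].
  by rewrite Pi geq_minl.
case: ifP => _ //; exact: leq_trans (geq_minr _ _) H.
Qed.

Theorem lemma3p4 (m : nat) (n : nat -> nat) :
  2 <= m ->
  (forall i, i < m -> 4 <= n i /\ ~~ odd (n i)) ->
  vertex_cover_number (strong_resolving_graph (@chain_adj m n))
  = 1 + \sum_(i < m) (n i - 2) %/ 2.
Proof.
move=> hm hn.
rewrite -(card_S0 hm hn) /vertex_cover_number.
apply/eqP; rewrite eqn_leq; apply/andP; split.
  exact: (bigmin_le _ _ (S0_cover hm hn)).
apply: (big_ind (fun x => #|S0 m n| <= x)).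
- exact: max_card.
- by move=> x y Hx Hy; rewrite leq_min Hx Hy.
- by move=> S HS; exact: (S0_min hm hn HS).
Qed.
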